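(* Let $F=SU(3)/T_{SU(3)}$ and let $z_1,z_2\in H^2(F;\mathbb{C})$ be non-zero with $z_1\cdot z_2=0$. Then there are $\lambda_1,\lambda_2\in\mathbb{C}^*$ such that either $z_1=\lambda_1x_+$ and $z_2=\lambda_2x_-$, or $z_1=\lambda_1x_-$ and $z_2=\lambda_2x_+$, where $x_\pm:=x_1+\tfrac12(1\pm\sqrt{-3})\,x_2$.
   Context: $T_{SU(3)}$ is the maximal torus of diagonal matrices in $SU(3)$, and $H^*(F;\mathbb{C})$ is identified with $\mathbb{C}[x_1,x_2]/(x_1^2+x_2^2+x_1x_2,\;x_1^2x_2+x_1x_2^2)$, $x_1,x_2$ of degree $2$. *)

(* Defs.v *)
From HB Require Import structures.
From mathcomp Require Import all_boot all_order all_algebra.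
From mathcomp Require Import mpoly.
Set Implicit Arguments. Unset Strict Implicit. Unset Printing Implicit Defensive.
Import Order.TTheory GRing.Theory Num.Theory.
Local Open Scope ring_scope.

(* Model of H^*(SU(3)/T;C) = C[x1,x2]/(x1^2+x2^2+x1x2, x1^2x2+x1x2^2),
   with x1 = 'X_0, x2 = 'X_1 in {mpoly C[2]} (polynomial degree 1 = cohomological degree 2). *)

Definition x1 {C : numClosedFieldType} : {mpoly C[2]} := 'X_(0 : 'I_2).
Definition x2 {C : numClosedFieldType} : {mpoly C[2]} := 'X_(1 : 'I_2).

Definition rel1 {C : numClosedFieldType} : {mpoly C[2]} :=
  x1 ^+ 2 + x2 ^+ 2 + x1 * x2.
Definition rel2 {C : numClosedFieldType} : {mpoly C[2]} :=
  x1 ^+ 2 * x2 + x1 * x2 ^+ 2.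

Definition in_rel_ideal {C : numClosedFieldType} (p : {mpoly C[2]}) : Prop :=
  exists q r : {mpoly C[2]}, p = q * rel1 + r * rel2.

(* Equality in the quotient ring H^*(F;C). *)
Definition coh_eq {C : numClosedFieldType} (p q : {mpoly C[2]}) : Prop :=
  in_rel_ideal (p - q).

(* Classes of H^2(F;C): represented by homogeneous polynomials of degree 1. *)
Definition isH2 {C : numClosedFieldType} (p : {mpoly C[2]}) : bool :=
  p \is 1.-homog.

Definition x_plus {C : numClosedFieldType} : {mpoly C[2]} :=
  x1 + ((1 + sqrtC (-3 : C)) / 2) *: x2.
Definition x_minus {C : numClosedFieldType} : {mpoly C[2]} :=
  x1 + ((1 - sqrtC (-3 : C)) / 2) *: x2.

(* Main.v *)
Set Warnings "-all".
Require Import Defs.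
From HB Require Import structures.
From mathcomp Require Import all_boot all_order all_algebra.
From mathcomp Require Import mpoly.
Import Order.TTheory GRing.Theory Num.Theory.
Local Open Scope ring_scope.
From mathcomp Require Import ring.
Lemma alg (C : numClosedFieldType) (a b c d k s : C) : s ^+ 2 = -3 ->
  a * c = k -> b * d = k -> a * d + b * c = k -> (a != 0 \/ b != 0) -> (c != 0 \/ d != 0) ->
  a != 0 /\ c != 0 /\ ((b = a * ((1 + s) / 2) /\ d = c * ((1 - s) / 2)) \/
                        (b = a * ((1 - s) / 2) /\ d = c * ((1 + s) / 2))).
Proof.
move=> hs hac hbd hadbc hab hcd.
have n2 : (2 : C) != 0 by rewrite pnatr_eq0.
have n3 : (-3 : C) != 0 by rewrite oppr_eq0 pnatr_eq0.
have kn0 : k != 0.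
  apply/eqP => k0; move: hac hbd hadbc; rewrite k0 => /eqP hac /eqP hbd /eqP hadbc.
  move: hac hbd; rewrite !mulf_eq0 => /orP[/eqP a0|/eqP c0] /orP[/eqP b0|/eqP d0].
  - by move: hab; rewrite a0 b0 eqxx; case.
  - move: hcd hadbc; rewrite a0 d0 mul0r add0r mulf_eq0 eqxx /=.
    by case=> // /negbTE -> ; rewrite orbF => /eqP b0; move: hab; rewrite a0 b0 eqxx; case.
  - move: hadbc; rewrite c0 b0 mulr0 addr0 mulf_eq0 => /orP[] /eqP h.
      by move: hab; rewrite h b0 eqxx; case.
    by move: hcd; rewrite h c0 eqxx; case.
  - by move: hcd; rewrite c0 d0 eqxx; case.
have an0 : a != 0 by apply: contraNneq kn0 => a0; rewrite -hac a0 mul0r.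
have cn0 : c != 0 by apply: contraNneq kn0 => c0; rewrite -hac c0 mulr0.
have q1 : c * (a ^+ 2 - a * b + b ^+ 2) = 0.
  have -> : c * (a ^+ 2 - a * b + b ^+ 2) = b * ((a * d + b * c) - a * c) + a * (a * c - b * d) by ring.
  by rewrite hac hbd hadbc !subrr !mulr0 addr0.
have q2 : a * (c ^+ 2 - c * d + d ^+ 2) = 0.
  have -> : a * (c ^+ 2 - c * d + d ^+ 2) = d * ((a * d + b * c) - a * c) + c * (a * c - b * d) by ring.
  by rewrite hac hbd hadbc !subrr !mulr0 addr0.
have fac (x y : C) : (y - x * ((1 + s) / 2)) * (y - x * ((1 - s) / 2)) = x ^+ 2 - x * y + y ^+ 2.
  have -> : (y - x * ((1 + s) / 2)) * (y - x * ((1 - s) / 2)) = x ^+ 2 - x * y + y ^+ 2 - x ^+ 2 * (s ^+ 2 + 3) / 4.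
    by field.
  by rewrite hs addNr mulr0 mul0r subr0.
move/eqP: q1 => q1; move/eqP: q2 => q2; move: q1 q2; rewrite !mulf_eq0 (negbTE an0) (negbTE cn0) /= -!fac !mulf_eq0 !subr_eq0.
have bad (w : C) : w = (1 + s) / 2 \/ w = (1 - s) / 2 -> b = a * w -> d = c * w -> False.
  move=> hw hb hd; move: hadbc; rewrite -hac hb hd => h.
  have : a * c * (2 * w - 1) = 0.
    by rewrite -(subrr (a * c)) -{2}h; ring.
  move/eqP; rewrite !mulf_eq0 (negbTE an0) (negbTE cn0) /= subr_eq0.
  move=> /eqP h2.
  have s0 : s = 0.
    case: hw h2 => -> h2.
      have -> : s = 2 * ((1 + s) / 2) - 1 by field.
      by rewrite h2 subrr.
    have -> : s = - (2 * ((1 - s) / 2) - 1) by field.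
    by rewrite h2 subrr oppr0.
  by move: n3; rewrite -hs s0 expr0n eqxx.
move=> /orP[/eqP hb|/eqP hb] /orP[/eqP hd|/eqP hd]; do 2 split => //.
- by case: (bad _ (or_introl erefl) hb hd).
- by left.
- by right.
- by case: (bad _ (or_intror erefl) hb hd).
Qed.
Section S.
Variable C : numClosedFieldType.
Local Notation P := {mpoly C[2]}.
Local Notation E p := (meval (fun _ : 'I_2 => (0:C)) p).

Lemma EX (i : 'I_2) : E ('X_i : P) = 0.
Proof. by rewrite mevalXU. Qed.

Lemma dX (i j : 'I_2) : (('X_i : P)^`M(j)) = ((i == j)%:R)%:MP.
Proof.
rewrite mderivX mnm1E; case: eqP => [->|ne].
  have -> : (U_(j) - U_(j) = 0)%MM by apply/mnmP => k; rewrite !mnmE subnn.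
  by rewrite mpolyX0 scale1r.
by rewrite scale0r.
Qed.

Lemma decomp (z : P) : isH2 z -> z = z@_U_(0) *: x1 + z@_U_(1) *: x2.
Proof.
move=> hz; apply/mpolyP => m.
rewrite mcoeffD !mcoeffZ /x1 /x2 !mcoeffX.
case: (boolP (mdeg m == 1%N)) => [/mdeg1P [i /eqP ->]|hm].
  by case: i => [[|[|k]] Hk] //=; rewrite !eq_mnm1 /= ?mulr1 ?mulr0 ?addr0 ?add0r //; congr (z@_ U_(_)); apply: val_inj.
rewrite (dhomog_nemf_coeff hz hm).
have h (i : 'I_2) : (U_(i) == m)%MM = false.
  by apply/negbTE; apply: contra hm => /eqP <-; rewrite mdeg1.
by rewrite !h !mulr0 addr0.
Qed.
Definition V1 (p : P) := E p = 0 /\ forall i, E p^`M(i) = 0.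
Definition V2 (p : P) := V1 p /\ forall i j, E p^`M(i)^`M(j) = 0.

Lemma V2M (q p : P) : V2 p -> V2 (q * p).
Proof.
move=> [[h0 h1] h2]; split; first split.
- by rewrite mevalM h0 mulr0.
- by move=> i; rewrite mderivM mevalD !mevalM h0 h1 !mulr0 addr0.
move=> i j; rewrite mderivM !mderivD !mderivM !mevalD !mevalM h0 !h1 h2.
by rewrite !mulr0 !addr0.
Qed.

Lemma HM (q p : P) i j : V1 p ->
  E (q * p)^`M(i)^`M(j) = E q * E p^`M(i)^`M(j).
Proof.
move=> [h0 h1]; rewrite mderivM !mderivD !mderivM !mevalD !mevalM h0 !h1.
by rewrite !mulr0 !add0r.
Qed.

Ltac simp := rewrite /= ?expr2 !(mderivD, mderivM, dX, mderivC, mevalD, mevalM, EX, mevalC, mulr0, mul0r, addr0, add0r).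

Lemma V1rel1 : V1 rel1.
Proof.
rewrite /rel1 /x1 /x2; split; first by simp.
by move=> i; simp.
Qed.

Lemma V2rel2 : V2 rel2.
Proof.
rewrite /rel2 /x1 /x2; split; first split.
- by simp.
- by move=> i; simp.
by move=> i j; simp.
Qed.

Lemma Hideal (w : P) : in_rel_ideal w -> exists k,
  forall i j, E w^`M(i)^`M(j) = k * E (rel1 : P)^`M(i)^`M(j).
Proof.
move=> [q [r ->]]; exists (E q) => i' j'.
have [_ h] := V2M r _ V2rel2.
have e : forall a b : P, E (a + b)^`M(i')^`M(j') = E a^`M(i')^`M(j') + E b^`M(i')^`M(j').
  by move=> a b; rewrite !mderivD mevalD.
by rewrite e h addr0 HM //; apply: V1rel1.
Qed.
Lemma mainS (z1 z2 : P) :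
  isH2 z1 -> isH2 z2 ->
  ~ coh_eq z1 0 -> ~ coh_eq z2 0 ->
  coh_eq (z1 * z2) 0 ->
  exists l1 l2 : C, l1 != 0 /\ l2 != 0 /\
    ((coh_eq z1 (l1 *: x_plus) /\ coh_eq z2 (l2 *: x_minus)) \/
     (coh_eq z1 (l1 *: x_minus) /\ coh_eq z2 (l2 *: x_plus))).
Proof.
move=> h1 h2 n1 n2 /Hideal [k hk].
have ceq (p q : P) : p = q -> coh_eq p q.
  by move=> ->; exists 0, 0; rewrite subrr !mul0r addr0.
rewrite (decomp z1 h1) (decomp z2 h2) in hk n1 n2 *.
set a := z1@_U_(0) in hk n1 n2 *; set b := z1@_U_(1) in hk n1 n2 *.
set c := z2@_U_(0) in hk n1 n2 *; set d := z2@_U_(1) in hk n1 n2 *.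
have e00 := hk 0 0; have e11 := hk 1 1; have e01 := hk 0 1.
move: e00 e11 e01; rewrite /rel1 /x1 /x2 subr0.
rewrite !(mderivD, mderivM, mderivZ, dX, mderivC, mevalD, mevalM, mevalZ, EX, mevalC, mulr0, mul0r, addr0, add0r) /=.
rewrite !mulr1 => e00 e11 e01.
have n2' : (2 : C) != 0 by rewrite pnatr_eq0.
have hac : a * c = k.
  have : (a * c - k) * 2 = (a * c + a * c) - k * (1 + 1) by ring.
  by rewrite e00 subrr => /eqP; rewrite mulf_eq0 (negbTE n2') orbF subr_eq0 => /eqP.
have hbd : b * d = k.
  have : (b * d - k) * 2 = (b * d + b * d) - k * (1 + 1) by ring.
  by rewrite e11 subrr => /eqP; rewrite mulf_eq0 (negbTE n2') orbF subr_eq0 => /eqP.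
have hadbc : a * d + b * c = k by [].

have nab : a != 0 \/ b != 0.
  case: (eqVneq a 0) => [a0|]; last by left.
  case: (eqVneq b 0) => [b0|]; last by right.
  by exfalso; apply: n1; apply: ceq; rewrite a0 b0 !scale0r addr0.
have ncd : c != 0 \/ d != 0.
  case: (eqVneq c 0) => [c0|]; last by left.
  case: (eqVneq d 0) => [d0|]; last by right.
  by exfalso; apply: n2; apply: ceq; rewrite c0 d0 !scale0r addr0.
have [an0 [cn0 [[hb hd]|[hb hd]]]] := alg _ _ _ _ _ _ _ (sqrtCK (-3 : C)) hac hbd hadbc nab ncd;
  exists a, c; do 2 split => //; [left|right]; split; apply: ceq;
  by rewrite /x_plus /x_minus /x1 /x2 ?hb ?hd scalerDr scalerA.
Qed.
End S.

Theorem lemma4p3 (C : numClosedFieldType) (z1 z2 : {mpoly C[2]}) :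
  isH2 z1 -> isH2 z2 ->
  ~ coh_eq z1 0 -> ~ coh_eq z2 0 ->
  coh_eq (z1 * z2) 0 ->
  exists l1 l2 : C, l1 != 0 /\ l2 != 0 /\
    ((coh_eq z1 (l1 *: x_plus) /\ coh_eq z2 (l2 *: x_minus)) \/
     (coh_eq z1 (l1 *: x_minus) /\ coh_eq z2 (l2 *: x_plus))).
Proof. exact: mainS. Qed.
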